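(* Let $\mathcal{G}$ (the Galilei group) be the group of transformations of $\mathbb{R}^4=\mathbb{R}^3\times\mathbb{R}$ of the form $x\mapsto \begin{pmatrix} S & w\\ 0^T & 1\end{pmatrix}x+b$ with $S\in SO(3)$, $w\in\mathbb{R}^3$, $b\in\mathbb{R}^4$. Then the nontrivial $\mathcal{G}$-invariant equivalence relations on $\mathbb{R}^4$ are exactly the relations $\sim_H$, where $H$ ranges over the proper additive subgroups of $\mathbb{R}$, whose equivalence classes are $[x]_H=x+(\mathbb{R}^3\times H)$.
   Context: An equivalence relation $\sim$ on $\mathbb{R}^4$ is $\mathcal{G}$-invariant if $x\sim y$ implies $g(x)\sim g(y)$ for all $x,y$ and $g\in\mathcal{G}$. It is trivial if it is the total relation $\mathbb{R}^4\times\mathbb{R}^4$ or the identity relation (diagonal). *)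

(* Defs.v *)
From HB Require Import structures.
From mathcomp Require Import all_boot all_order all_algebra.
From mathcomp Require Import reals.
Set Implicit Arguments. Unset Strict Implicit. Unset Printing Implicit Defensive.
Import Order.TTheory GRing.Theory Num.Theory.
Local Open Scope ring_scope.

Section Galilei.
Variable R : realType.

Definition is_SO3 (S : 'M[R]_3) : Prop := S^T *m S = 1%:M /\ \det S = 1.

Definition galilei_map (S : 'M[R]_3) (w : 'cV[R]_3) (b : 'cV[R]_4)
  : 'cV[R]_4 -> 'cV[R]_4 :=
  fun x => (block_mx S w 0 1 : 'M[R]_4) *m x + b.

Definition in_Galilei (g : 'cV[R]_4 -> 'cV[R]_4) : Prop :=
  exists S w b, is_SO3 S /\ g = galilei_map S w b.

Definition is_equivalence (rel : 'cV[R]_4 -> 'cV[R]_4 -> Prop) : Prop :=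
  (forall x, rel x x) /\ (forall x y, rel x y -> rel y x) /\
  (forall x y z, rel x y -> rel y z -> rel x z).

Definition G_invariant (rel : 'cV[R]_4 -> 'cV[R]_4 -> Prop) : Prop :=
  forall g, in_Galilei g -> forall x y, rel x y -> rel (g x) (g y).

Definition trivial_rel (rel : 'cV[R]_4 -> 'cV[R]_4 -> Prop) : Prop :=
  (forall x y, rel x y) \/ (forall x y, rel x y <-> x = y).

Definition additive_subgroup (H : R -> Prop) : Prop :=
  H 0 /\ (forall a b, H a -> H b -> H (a - b)).

Definition proper_subset (H : R -> Prop) : Prop := exists r, ~ H r.

(* x ~_H y  iff  y \in x + (R^3 x H), i.e. the time coordinate of y - x lies in H *)
Definition sim_H (H : R -> Prop) (x y : 'cV[R]_4) : Prop :=
  H ((y - x) ord_max 0).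

End Galilei.

(* Main.v *)
Require Import Defs.
From HB Require Import structures.
From mathcomp Require Import all_boot all_order all_algebra.
From mathcomp Require Import reals.
From mathcomp Require Import ring lra.
Set Implicit Arguments. Unset Strict Implicit. Unset Printing Implicit Defensive.
Import Order.TTheory GRing.Theory Num.Theory.
Local Open Scope ring_scope.
Section S.
Variable R : realType.
Definition mk3 (f : nat -> nat -> R) : 'M[R]_3 := \matrix_(i,j) f i j.
Definition v3 (g : nat -> R) : 'cV[R]_3 := \matrix_(i,j) g i.
Lemma det3 f : \det (mk3 f) =
  f 0 0 * (f 1 1 * f 2 2 - f 1 2 * f 2 1)
  - f 0 1 * (f 1 0 * f 2 2 - f 1 2 * f 2 0)
  + f 0 2 * (f 1 0 * f 2 1 - f 1 1 * f 2 0).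
Proof.
rewrite (expand_det_row _ ord0) !big_ord_recl big_ord0 /cofactor.
rewrite !(expand_det_row _ ord0) !big_ord_recl !big_ord0 /cofactor.
rewrite !det_mx11 !mxE /bump /=. ring. Qed.

Lemma v3_eq g h : (forall i, (i < 3)%N -> g i = h i) -> v3 g = v3 h.
Proof. by move=> H; apply/matrixP => i j; rewrite !mxE H. Qed.

Lemma mul33 f g : mk3 f *m v3 g =
  v3 (fun i => f i 0%N * g 0%N + f i 1%N * g 1%N + f i 2%N * g 2%N).
Proof.
apply/matrixP => i j; rewrite !mxE !big_ord_recl big_ord0 !mxE /bump /=.
by rewrite addr0 addrA.
Qed.

Lemma addv3 g h : v3 g + v3 h = v3 (fun i => g i + h i).
Proof. by apply/matrixP => i j; rewrite !mxE. Qed.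
Lemma subv3 g h : v3 g - v3 h = v3 (fun i => g i - h i).
Proof. by apply/matrixP => i j; rewrite !mxE. Qed.

Definition cd (u : 'cV[R]_3) (n : nat) := u (inord n) 0.
Lemma vexpand u : u = v3 (cd u).
Proof. by apply/matrixP => i j; rewrite mxE ord1 /cd inord_val. Qed.

Lemma mk3_SO3 f :
  (forall i j, (i < 3)%N -> (j < 3)%N ->
     f 0%N i * f 0%N j + f 1%N i * f 1%N j + f 2%N i * f 2%N j = (i == j)%:R) ->
  \det (mk3 f) = 1 -> is_SO3 (mk3 f).
Proof.
move=> H Hd; split=> //; apply/matrixP => i j.
rewrite !mxE !big_ord_recl big_ord0 !mxE /bump /= addr0 addrA H // -?(inj_eq val_inj).
Qed.

Definition Rxy c s := mk3 (fun i j => match i, j with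
  | 0%N, 0%N => c | 0%N, 1%N => -s | 1%N, 0%N => s | 1%N, 1%N => c | 2%N, 2%N => 1 | _, _ => 0 end).
Definition Ryz c s := mk3 (fun i j => match i, j with
  | 0%N, 0%N => 1 | 1%N, 1%N => c | 1%N, 2%N => -s | 2%N, 1%N => s | 2%N, 2%N => c | _, _ => 0 end).

Lemma Rxy_SO3 c s : c ^+ 2 + s ^+ 2 = 1 -> is_SO3 (Rxy c s).
Proof.
move=> H; apply: mk3_SO3; last by rewrite det3 /=; lra.
by case=> [|[|[|i]]] [|[|[|j]]] //= _ _; lra.
Qed.
Lemma Ryz_SO3 c s : c ^+ 2 + s ^+ 2 = 1 -> is_SO3 (Ryz c s).
Proof.
move=> H; apply: mk3_SO3; last by rewrite det3 /=; lra.
by case=> [|[|[|i]]] [|[|[|j]]] //= _ _; lra.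
Qed.

Definition line (k : nat) (x : R) := v3 (fun i => if i == k then x else 0).

Section Fill.
Variable P : 'cV[R]_3 -> Prop.
Hypothesis Psub : forall u v, P u -> P v -> P (u - v).
Hypothesis Prot : forall S u, is_SO3 S -> P u -> P (S *m u).

Lemma fill_line0 a : a != 0 -> P (line 0 a) -> forall x, P (line 0 x).
Proof.
move=> a0 Pa.
have P0 : P 0 by rewrite -(subrr (line 0 a)); apply: Psub.
have Padd u v : P u -> P v -> P (u + v).
  move=> Pu Pv; have -> : u + v = u - (0 - v) by rewrite sub0r opprK.
  by apply: Psub=> //; apply: Psub.
have Pc c : c ^+ 2 <= 1 -> P (line 0 (2 * c * a)).
  move=> hc; set s := Num.sqrt (1 - c ^+ 2).
  have hs : s ^+ 2 = 1 - c ^+ 2 by rewrite sqr_sqrtr // subr_ge0.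
  have e1 : c ^+ 2 + s ^+ 2 = 1 by rewrite hs; ring.
  have e2 : c ^+ 2 + (- s) ^+ 2 = 1 by rewrite sqrrN.
  have := Padd _ _ (Prot (Rxy_SO3 e1) Pa) (Prot (Rxy_SO3 e2) Pa).
  rewrite !mul33 addv3 /=; congr P; apply: v3_eq; case=> [|[|[|i]]] //= _; ring.
have Py y : `|y| <= 2 * `|a| -> P (line 0 y).
  move=> hy; have aa : 0 < `|a| by rewrite normr_gt0.
  have E : 2 * (y / (2 * a)) * a = y by field.
  have := Pc (y / (2 * a)); rewrite E.
  apply; rewrite expr_div_n ler_pdivrMr ?mul1r; last first.
    by rewrite lt_def sqr_ge0 andbT sqrf_eq0 mulf_eq0 negb_or a0 andbT pnatr_eq0.
  rewrite -[(2 * a) ^+ 2]real_normK ?num_real // normrM (ger0_norm (ler0n R 2)).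
  rewrite -(real_normK (num_real y)); have := normr_ge0 y; nra.
have Pn y n : P (line 0 y) -> P (line 0 (y *+ n)).
  move=> Pu; elim: n => [|n IH].
    by congr P: P0; apply/matrixP => i j; rewrite !mxE mulr0n; case: ifP.
  have := Padd _ _ Pu IH; rewrite addv3; congr P; apply: v3_eq => i _.
  by rewrite mulrS; case: ifP => _ //; rewrite addr0.
move=> x.
set n := (Num.bound (`|x| / (2 * `|a|))).+1.
have aa : 0 < 2 * `|a| by rewrite mulr_gt0 // normr_gt0.
have hb := archi_boundP (divr_ge0 (normr_ge0 x) (ltW aa)).
have n0 : 0 < n%:R :> R by rewrite ltr0n.
have : P (line 0 ((x / n%:R) *+ n)).
  apply: Pn; apply: Py; rewrite normrM normfV (ger0_norm (ler0n R n)) ler_pdivrMr // mulrC -ler_pdivrMr //.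
  apply: ltW; apply: (lt_le_trans hb); rewrite ler_nat /n; exact: leqnSn.
by rewrite -mulr_natr mulfVK // gt_eqF.
Qed.

Lemma P0 u : P u -> P 0.
Proof. by move=> Pu; rewrite -(subrr u); apply: Psub. Qed.
Lemma Padd u v : P u -> P v -> P (u + v).
Proof.
move=> Pu Pv; have -> : u + v = u - (0 - v) by rewrite sub0r opprK.
by apply: Psub=> //; apply: Psub=> //; apply: P0 Pu.
Qed.
Lemma e01 : (0 : R) ^+ 2 + 1 ^+ 2 = 1. Proof. by rewrite expr0n add0r expr1n. Qed.
Lemma e10 : (-1 : R) ^+ 2 + 0 ^+ 2 = 1. Proof. by rewrite sqrrN expr1n expr0n addr0. Qed.

Lemma line0_from k a : (k < 3)%N -> a != 0 -> P (line k a) -> forall x, P (line 0 x).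
Proof.
case: k => [|[|[|k]]] // _ a0 Pa.
- exact: fill_line0 Pa.
- apply: (fill_line0 (a := -a)); first by rewrite oppr_eq0.
  have := Prot (Rxy_SO3 e01) Pa; rewrite mul33; congr P.
  by apply: v3_eq; case=> [|[|[|i]]] //= _; ring.
- apply: (fill_line0 (a := a)) => //.
  have := Prot (Rxy_SO3 e01) (Prot (Ryz_SO3 e01) Pa); rewrite !mul33; congr P.
  by apply: v3_eq; case=> [|[|[|i]]] //= _; ring.
Qed.

Lemma fill s : P s -> s != 0 -> forall u, P u.
Proof.
move=> Ps s0.
have [x Px] : exists k a, [/\ (k < 3)%N, a != 0 & P (line k a)].
  rewrite (vexpand s) in Ps s0.
  case: (eqVneq (cd s 0) 0) => h0; last first.
    exists 0%N, (2 * cd s 0); split => //; first by rewrite mulf_neq0 ?pnatr_eq0.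
    have := Padd Ps (Prot (Ryz_SO3 e10) Ps); rewrite mul33 addv3; congr P.
    by apply: v3_eq; case=> [|[|[|i]]] //= _; ring.
  case: (eqVneq (cd s 2) 0) => h2; last first.
    exists 2%N, (2 * cd s 2); split => //; first by rewrite mulf_neq0 ?pnatr_eq0.
    have := Padd Ps (Prot (Rxy_SO3 e10) Ps); rewrite mul33 addv3; congr P.
    by apply: v3_eq; case=> [|[|[|i]]] //= _; ring.
  case: (eqVneq (cd s 1) 0) => h1; last first.
    exists 1%N, (2 * cd s 1); split => //; first by rewrite mulf_neq0 ?pnatr_eq0.
    have := Padd Ps (Prot (Rxy_SO3 e10) (Prot (Ryz_SO3 e10) Ps)).
    rewrite !mul33 addv3; congr P.
    by apply: v3_eq; case=> [|[|[|i]]] //= _; ring.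
  exfalso; move/eqP: s0; apply; apply/matrixP => i j; rewrite !mxE.
  by case: i => [[|[|[|i]]] hi] //=.
case: Px => a [hk a0 Pa] u.
have L0 := line0_from hk a0 Pa.
have L1 y : P (line 1 y).
  have := Prot (Rxy_SO3 e01) (L0 y); rewrite mul33; congr P.
  by apply: v3_eq; case=> [|[|[|i]]] //= _; ring.
have L2 y : P (line 2 y).
  have := Prot (Ryz_SO3 e01) (L1 y); rewrite mul33; congr P.
  by apply: v3_eq; case=> [|[|[|i]]] //= _; ring.
have := Padd (Padd (L0 (cd u 0)) (L1 (cd u 1))) (L2 (cd u 2)).
rewrite !addv3 [in X in _ -> X](vexpand u); congr P.
by apply: v3_eq; case=> [|[|[|i]]] //= _; ring.
Qed.
End Fill.

Definition tc (x : 'cV[R]_4) := x ord_max 0.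
Definition cv (s : 'cV[R]_3) (t : 'cV[R]_1) : 'cV[R]_4 := col_mx s t.

Lemma cv_split (x : 'cV[R]_4) : exists s t, x = cv s t.
Proof. by exists (usubmx (x : 'cV_(3+1))), (dsubmx (x : 'cV_(3+1))); rewrite /cv vsubmxK. Qed.

Lemma tc_cv s t : tc (cv s t) = t 0 0.
Proof.
rewrite /tc /cv -(col_mxEd s t 0 0); congr (col_mx s t _ _); exact: val_inj.
Qed.

Lemma gal_cv S w b s t :
  galilei_map S w b (cv s t) = cv (S *m s + w *m t) t + b.
Proof.
have := mul_block_col S w 0 1 s t; rewrite mul0mx mul1mx add0r => h.
by rewrite /galilei_map /cv; congr (_ + _); exact: h.
Qed.

Lemma cv_sub s t s' t' : cv s t - cv s' t' = cv (s - s') (t - t').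
Proof.
have h : col_mx s t - col_mx s' t' = col_mx (s - s') (t - t') :> 'M_(3+1,1).
  by rewrite opp_col_mx add_col_mx.
exact: h.
Qed.
Lemma cv_add s t s' t' : cv s t + cv s' t' = cv (s + s') (t + t').
Proof.
have h : col_mx s t + col_mx s' t' = col_mx (s + s') (t + t') :> 'M_(3+1,1).
  by rewrite add_col_mx.
exact: h.
Qed.
Lemma cv0 : cv 0 0 = 0.
Proof. have h : col_mx 0 0 = 0 :> 'M[R]_(3+1,1) by rewrite col_mx0. exact: h. Qed.

Lemma SO3_1 : is_SO3 (1 : 'M[R]_3).
Proof. by split; rewrite ?trmx1 ?mul1mx ?det1. Qed.

Lemma gal_trans (b x : 'cV[R]_4) : galilei_map 1 0 b x = x + b.
Proof.
have [s [t ->]] := cv_split x.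
by rewrite gal_cv mul1mx mul0mx addr0.
Qed.

Lemma tc_gal S w b (x y : 'cV[R]_4) : tc (galilei_map S w b y - galilei_map S w b x) = tc (y - x).
Proof.
have [s [t ->]] := cv_split x; have [s' [t' ->]] := cv_split y.
by rewrite !gal_cv opprD addrACA subrr addr0 !cv_sub !tc_cv.
Qed.
End S.

From Stdlib Require Import Classical.
Unset Implicit Arguments.

Theorem theorem3p6 (R : realType) (rel : 'cV[R]_4 -> 'cV[R]_4 -> Prop) :
  (is_equivalence rel /\ G_invariant rel /\ ~ trivial_rel rel) <->
  (exists H : R -> Prop, additive_subgroup H /\ proper_subset H /\
     forall x y, rel x y <-> sim_H H x y).
Proof.
split.
- move=> [[Rrefl [Rsym Rtrans]] [Ginv Ntriv]].
  pose K v := rel 0 v.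
  have Rtr x y b : rel x y -> rel (x + b) (y + b).
    move=> h; rewrite -!gal_trans; apply: Ginv h.
    by exists 1, 0, b; split => //; exact: SO3_1.
  have relK x y : rel x y <-> K (y - x).
    split => h.
      by have := Rtr _ _ (- x) h; rewrite subrr.
    by have := Rtr _ _ x h; rewrite add0r subrK.
  have Ksub u v : K u -> K v -> K (u - v).
    move=> Ku Kv; have := Rtr _ _ (u - v) Kv; rewrite add0r subrKC => h.
    exact: Rtrans Ku (Rsym _ _ h).
  have K0 : K 0 by exact: Rrefl.
  have Kadd u v : K u -> K v -> K (u + v).
    move=> Ku Kv; have -> : u + v = u - (0 - v) by rewrite sub0r opprK.
    by apply: (Ksub) => //; apply: (Ksub).
  have Klin S w v : is_SO3 S -> K v -> K (galilei_map S w 0 v).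
    move=> hS Kv; have := Ginv (galilei_map S w 0) _ _ _ Kv.
    have -> : galilei_map S w 0 0 = 0 by rewrite /galilei_map mulmx0 addr0.
    by apply; exists S, w, 0.
  have [v [Kv v0]] : exists v, K v /\ v <> 0.
    apply: NNPP => hn; apply: Ntriv; right => x y; split.
      move/relK => h; apply/esym/eqP; rewrite -subr_eq0; apply/eqP.
      by apply: NNPP => hne; apply: hn; exists (y - x).
    by move=> ->; apply: Rrefl.
  have Ksp : forall s, K (cv s 0).
    have [s [t ev]] := cv_split v.
    case: (eqVneq (t 0 0) 0) => ht.
    + have t0 : t = 0 by apply/matrixP => i j; rewrite !ord1 ht mxE.
      have s0 : s != 0 by apply/eqP => s0; apply: v0; rewrite ev s0 t0 cv0.
      pose P u := K (cv u 0).
      apply: (@fill R P _ _ s) => //.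
      * by move=> a b Pa Pb; rewrite /P -[X in cv _ X](subrr 0) -cv_sub; apply: (Ksub).
      * move=> S u hS Pu; have := Klin S 0 _ hS Pu; rewrite gal_cv mul0mx !addr0.
        exact.
      * by rewrite /P -t0 -ev.
    + move=> u.
      have hb : K (cv u t).
        have := Klin 1 ((t 0 0)^-1 *: (u - s)) _ (@SO3_1 R) Kv.
        rewrite ev gal_cv addr0 mul1mx [t in _ *m t]mx11_scalar mul_mx_scalar.
        by rewrite scalerA divff // scale1r addrC subrK.
      have hc : K (cv 0 t).
        have := Klin 1 ((t 0 0)^-1 *: (- s)) _ (@SO3_1 R) Kv.
        rewrite ev gal_cv addr0 mul1mx [t in _ *m t]mx11_scalar mul_mx_scalar.
        by rewrite scalerA divff // scale1r subrr.
      by have := Ksub _ _ hb hc; rewrite cv_sub subr0 subrr.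
  pose H (r : R) := K (cv 0 r%:M).
  have KH x : K x <-> H (tc x).
    have [s [t ->]] := cv_split x.
    have E : cv s t = cv s 0 + cv 0 (t 0 0)%:M.
      by rewrite cv_add addr0 add0r -mx11_scalar.
    rewrite tc_cv E /H; split => h.
      have := Ksub _ _ h (Ksp s); by rewrite addrC addKr.
    exact: Kadd.
  exists H; split; [split|split].
  + by rewrite /H raddf0 cv0.
  + move=> a b Ha Hb; rewrite /H raddfB /= -[X in cv X](subrr 0) -cv_sub.
    exact: Ksub.
  + apply: NNPP => hn; apply: Ntriv; left => x y; apply/relK/KH.
    by apply: NNPP => h; apply: hn; exists (tc (y - x)).
  + move=> x y; rewrite relK KH; done.
- move=> [H [[H0 Hsub] [[r Hr] Hrel]]].
  have Hadd a b : H a -> H b -> H (a + b).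
    move=> Ha Hb; have -> : a + b = a - (0 - b) by rewrite sub0r opprK.
    by apply: (Hsub) => //; apply: (Hsub).
  have tcB (x y : 'cV[R]_4) : tc (x - y) = tc x - tc y by rewrite /tc !mxE.
  split; [split; [|split]|split].
  + by move=> x; apply/Hrel; rewrite /sim_H subrr mxE.
  + move=> x y /Hrel hxy; apply/Hrel; move: hxy; rewrite /sim_H.
    have -> : (x - y) ord_max 0 = 0 - (y - x) ord_max 0 by rewrite !mxE; ring.
    exact: Hsub.
  + move=> x y z /Hrel h1 /Hrel h2; apply/Hrel; rewrite /sim_H.
    have -> : (z - x) ord_max 0 = (z - y) ord_max 0 + (y - x) ord_max 0.
      by rewrite !mxE; ring.
    exact: Hadd.
  + move=> g [S [w [b [hS ->]]]] x y /Hrel h; apply/Hrel.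
    by rewrite /sim_H -/(tc _) tc_gal.
  + case=> [htot|hid].
      apply: Hr; have := htot 0 (cv 0 r%:M); move/Hrel.
      by rewrite /sim_H -/(tc _) subr0 tc_cv mxE.
    have e : cv (const_mx (1:R)) 0 <> 0.
      move=> e; have h : (col_mx (const_mx 1) (0:'cV_1) : 'cV[R]_(3+1)) = 0 by exact: e.
      have := congr1 (fun m : 'cV[R]_(3+1) => m (lshift 1 (0 : 'I_3)) 0) h.
      by rewrite /= col_mxEu !mxE => /eqP; rewrite oner_eq0.
    apply: e; symmetry; apply/hid/Hrel.
    by rewrite /sim_H -/(tc _) subr0 tc_cv mxE.
Qed.
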